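(* Let $L$ be a Lie algebra over a field $K$, and let $\varphi: L \to L$ be a linear map. Then $\varphi$ is a Hom-Lie structure on $L$ if and only if the bilinear map $F_\varphi: L \times L \to L$ defined by $$F_\varphi(x,y) = [\varphi(x),y] + [x,\varphi(y)]$$ satisfies $$[F_\varphi(x,y),z] + [F_\varphi(z,x),y] + [F_\varphi(y,z),x] = 0$$ for all $x,y,z \in L$.
   Context: A Hom-Lie structure on a Lie algebra $L$ is a linear map $\varphi: L \to L$ satisfying the Hom-Jacobi equation $[[x,y],\varphi(z)] + [[z,x],\varphi(y)] + [[y,z],\varphi(x)] = 0$ for all $x,y,z \in L$. *)

(* Defs.v *)
From HB Require Import structures.
From mathcomp Require Import all_boot all_order all_algebra.
Set Implicit Arguments. Unset Strict Implicit. Unset Printing Implicit Defensive.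
Import GRing.Theory.
Local Open Scope ring_scope.

Definition is_lie_bracket (K : fieldType) (L : lmodType K) (br : L -> L -> L) : Prop :=
  [/\ (forall (a : K) (x y z : L), br (a *: x + y) z = a *: br x z + br y z),
      (forall (a : K) (x y z : L), br x (a *: y + z) = a *: br x y + br x z),
      (forall x : L, br x x = 0) &
      (forall x y z : L, br x (br y z) + br y (br z x) + br z (br x y) = 0)].

Definition hom_lie_structure (K : fieldType) (L : lmodType K) (br : L -> L -> L)
  (phi : {linear L -> L}) : Prop :=
  forall x y z : L,
    br (br x y) (phi z) + br (br z x) (phi y) + br (br y z) (phi x) = 0.

Definition Fphi (K : fieldType) (L : lmodType K) (br : L -> L -> L)
  (phi : L -> L) (x y : L) : L := br (phi x) y + br x (phi y).

(* Main.v *)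
Require Import Defs.
From mathcomp Require Import all_boot all_order all_algebra.
Local Open Scope ring_scope.
Import GRing.Theory.

Theorem lemma1p1 (K : fieldType) (L : lmodType K) (br : L -> L -> L)
  (hL : is_lie_bracket br) (phi : {linear L -> L}) :
  hom_lie_structure br phi <->
  (forall x y z : L,
     br (Fphi br phi x y) z + br (Fphi br phi z x) y + br (Fphi br phi y z) x = 0).
Proof.
case: hL => lin1 lin2 alt jac.
have addl : forall x y z, br (x + y) z = br x z + br y z.
  by move=> x y z; have := lin1 1 x y z; rewrite !scale1r.
have addr : forall x y z, br x (y + z) = br x y + br x z.
  by move=> x y z; have := lin2 1 x y z; rewrite !scale1r.
have anti : forall x y, br x y = - br y x.
  move=> x y; apply/eqP; rewrite -subr_eq0 opprK; apply/eqP.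
  by have := alt (x + y); rewrite addl !addr alt alt add0r addr0.
have J : forall a b c, br (br a b) c + br (br b c) a + br (br c a) b = 0.
  move=> a b c; rewrite (anti (br a b)) (anti (br b c)) (anti (br c a)).
  by apply/eqP; rewrite -oppr_eq0 !opprD !opprK -addrA addrC jac.
have key : forall x y z,
  br (Fphi br phi x y) z + br (Fphi br phi z x) y + br (Fphi br phi y z) x
  + (br (br x y) (phi z) + br (br z x) (phi y) + br (br y z) (phi x)) = 0.
  move=> x y z; rewrite /Fphi !addl.
  rewrite (AC (((2*2)*2)*(2*1)) (((1*9)*4)*((5*8)*2)*((3*7)*6))).
  have := congr2 (fun a b => a + b) (congr2 (fun a b => a + b) (J (phi x) y z) (J (phi y) z x)) (J (phi z) x y).
  by rewrite /= !addr0; apply.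
split=> H x y z.
  by have := key x y z; rewrite H addr0.
by have := key x y z; rewrite H add0r.
Qed.
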